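(* Let $\varepsilon>0$, $y_0\in(-1,0]$, and set $\varepsilon_1=\varepsilon/(1+y_0)^2$, $\varepsilon_2=\varepsilon/(1-y_0)^2$, $a=(1+y_0)/(1-y_0)\in(0,1]$. Let $c_1,c_2>0$. Let $\Omega=(\omega_1,\omega_2)^T$ be a classical solution on $[0,1]\times[t_0,\infty)$ of $$\partial_t\omega_i(x,t)=\varepsilon_i\,\partial_x^2\omega_i(x,t)-c_i\,\omega_i(x,t),\quad i=1,2,$$ with $$\omega_1(0,t)=\omega_2(0,t),\qquad \partial_x\omega_1(0,t)+a\,\partial_x\omega_2(0,t)=0,\qquad \omega_1(1,t)=\omega_2(1,t)=0 .$$ Then for all $t\ge t_0$, $$\|\Omega(\cdot,t)\|_{L^2}\le \Pi\, e^{-\gamma(t-t_0)}\,\|\Omega(\cdot,t_0)\|_{L^2},\qquad \Pi=a^{-3/2},\quad \gamma=\min\{a^3c_1,\,c_2\}+\frac{\varepsilon_2}{4},$$ where $\|\Omega(\cdot,t)\|_{L^2}^2=\int_0^1(\omega_1(x,t)^2+\omega_2(x,t)^2)\,dx$.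
   Context: This is the ''folded target system'': the boundary conditions at $x=0$ encode continuity of the unfolded state and of its spatial derivative at the folding point $y_0$. *)

(* Defs.v *)
From Stdlib Require Import Reals.
Open Scope R_scope.

Definition closed_dom (t0 x t : R) : Prop := 0 <= x <= 1 /\ t0 <= t.
Definition open_dom (t0 x t : R) : Prop := 0 < x < 1 /\ t0 < t.

Definition cont2_on (D : R -> R -> Prop) (f : R -> R -> R) : Prop :=
  forall x t, D x t -> forall e, 0 < e -> exists d, 0 < d /\
    forall y s, D y s -> Rabs (y - x) < d -> Rabs (s - t) < d ->
      Rabs (f y s - f x t) < e.

(* w is of class C^{2,1} on [0,1] x [t0,oo) (derivatives continuous up to the
   boundary), with  wx = d_x w,  wxx = d_x^2 w,  wt = d_t w, and solves
   d_t w = eps * d_x^2 w - c * w there. *)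
Definition classical_sol (eps c t0 : R) (w wx wxx wt : R -> R -> R) : Prop :=
  (forall x t, open_dom t0 x t ->
     derivable_pt_lim (fun y => w y t) x (wx x t) /\
     derivable_pt_lim (fun y => wx y t) x (wxx x t) /\
     derivable_pt_lim (fun s => w x s) t (wt x t)) /\
  cont2_on (closed_dom t0) w /\ cont2_on (closed_dom t0) wx /\
  cont2_on (closed_dom t0) wxx /\ cont2_on (closed_dom t0) wt /\
  (forall x t, closed_dom t0 x t -> wt x t = eps * wxx x t - c * w x t).

Definition L2_integrand (w1 w2 : R -> R -> R) (t : R) : R -> R :=
  fun x => w1 x t ^ 2 + w2 x t ^ 2.

(* Main.v *)
Require Import Defs.
From Stdlib Require Import Reals Lra Psatz.
From Coquelicot Require Import Coquelicot.
Open Scope R_scope.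


Definition clamp (x : R) : R := Rmax 0 (Rmin 1 x).

Lemma clamp_id x : 0 <= x <= 1 -> clamp x = x.
Proof. intros; unfold clamp, Rmax, Rmin; repeat destruct Rle_dec; lra. Qed.

Lemma clamp_in x : 0 <= clamp x <= 1.
Proof. unfold clamp, Rmax, Rmin; repeat destruct Rle_dec; lra. Qed.

Lemma clamp_lip x y : Rabs (clamp y - clamp x) <= Rabs (y - x).
Proof. unfold clamp, Rmax, Rmin; repeat destruct Rle_dec; unfold Rabs; repeat destruct Rcase_abs; lra. Qed.

Lemma max_lip t0 x y : Rabs (Rmax t0 y - Rmax t0 x) <= Rabs (y - x).
Proof. unfold Rmax; repeat destruct Rle_dec; unfold Rabs; repeat destruct Rcase_abs; lra. Qed.

Lemma ext_cont2 t0 w : cont2_on (closed_dom t0) w ->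
  forall x s, continuity_2d_pt (fun u v => w (clamp u) (Rmax t0 v)) x s.
Proof.
  intros H x s eps.
  assert (Hd : closed_dom t0 (clamp x) (Rmax t0 s)).
  { split. apply clamp_in. apply Rmax_l. }
  destruct (H _ _ Hd eps (cond_pos eps)) as [d [dpos Hdd]].
  exists (mkposreal d dpos). intros u v Hu Hv. simpl in *.
  apply Hdd. split. apply clamp_in. apply Rmax_l.
  eapply Rle_lt_trans. apply clamp_lip. exact Hu.
  eapply Rle_lt_trans. apply max_lip. exact Hv.
Qed.

Lemma cont2_to_1 f x y : continuity_2d_pt f x y -> continuity_pt (fun u => f u y) x.
Proof.
  intros H eps Heps. destruct (H (mkposreal eps Heps)) as [d Hd].
  exists d; split; [apply cond_pos|]. intros u [_ Hu]. simpl in *. unfold R_dist in *.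
  apply Hd; [exact Hu | rewrite Rminus_eq_0, Rabs_R0; apply cond_pos].
Qed.

Lemma cont2_to_2 f x y : continuity_2d_pt f x y -> continuity_pt (fun v => f x v) y.
Proof.
  intros H eps Heps. destruct (H (mkposreal eps Heps)) as [d Hd].
  exists d; split; [apply cond_pos|]. intros u [_ Hu]. simpl in *. unfold R_dist in *.
  apply Hd; [rewrite Rminus_eq_0, Rabs_R0; apply cond_pos | exact Hu].
Qed.

Lemma cont_x t0 w t : cont2_on (closed_dom t0) w -> t0 <= t ->
  forall x, continuity_pt (fun y => w (clamp y) t) x.
Proof.
  intros H Ht x. pose proof (cont2_to_1 _ x t (ext_cont2 t0 w H x t)) as C.
  simpl in C. rewrite Rmax_right in C by lra. exact C.
Qed.

Lemma cp_plus f g x : continuity_pt f x -> continuity_pt g x -> continuity_pt (fun y => f y + g y) x.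
Proof. apply (continuity_pt_plus f g). Qed.
Lemma cp_minus f g x : continuity_pt f x -> continuity_pt g x -> continuity_pt (fun y => f y - g y) x.
Proof. apply (continuity_pt_minus f g). Qed.
Lemma cp_mult f g x : continuity_pt f x -> continuity_pt g x -> continuity_pt (fun y => f y * g y) x.
Proof. apply (continuity_pt_mult f g). Qed.
Lemma cp_const c x : continuity_pt (fun _ => c) x.
Proof. apply continuity_pt_const. intros a b; reflexivity. Qed.
Lemma cp_clamp x : continuity_pt clamp x.
Proof.
  intros eps He. exists eps; split; auto. intros y [_ Hy]. simpl in *. unfold R_dist in *.
  eapply Rle_lt_trans. apply clamp_lip. exact Hy.
Qed.
Lemma cp_clamp' x : continuity_pt (fun y => clamp y) x.
Proof. apply cp_clamp. Qed.

Ltac cpt := repeat first [ apply cp_const | apply cp_minus | apply cp_plus | apply cp_mult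
   | apply cp_clamp' | eassumption ].

Lemma dl_plus f g x a b : derivable_pt_lim f x a -> derivable_pt_lim g x b ->
  derivable_pt_lim (fun y => f y + g y) x (a + b).
Proof. apply (derivable_pt_lim_plus f g). Qed.
Lemma dl_minus f g x a b : derivable_pt_lim f x a -> derivable_pt_lim g x b ->
  derivable_pt_lim (fun y => f y - g y) x (a - b).
Proof. apply (derivable_pt_lim_minus f g). Qed.
Lemma dl_mult f g x a b : derivable_pt_lim f x a -> derivable_pt_lim g x b ->
  derivable_pt_lim (fun y => f y * g y) x (a * g x + f x * b).
Proof. apply (derivable_pt_lim_mult f g). Qed.
Lemma dl_const c x : derivable_pt_lim (fun _ => c) x 0.
Proof. apply (derivable_pt_lim_const c). Qed.
Lemma dl_id x : derivable_pt_lim (fun y => y) x 1.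
Proof. apply (derivable_pt_lim_id x). Qed.
Lemma dl_eq f x l l' : derivable_pt_lim f x l -> l = l' -> derivable_pt_lim f x l'.
Proof. intros H <-; exact H. Qed.

Ltac dlt := repeat first [ apply dl_const | apply dl_minus | apply dl_plus | apply dl_mult
   | apply dl_id | eassumption ].

Lemma dl_loc f g x l d : 0 < d -> (forall y, Rabs (y - x) < d -> f y = g y) ->
  derivable_pt_lim f x l -> derivable_pt_lim g x l.
Proof.
  intros dpos Heq H eps He. destruct (H eps He) as [del Hdel].
  assert (P : 0 < Rmin del d) by (apply Rmin_pos; [apply cond_pos|lra]).
  exists (mkposreal _ P). intros h hn hl. simpl in hl.
  rewrite <- !Heq. apply Hdel; auto. eapply Rlt_le_trans; [exact hl|apply Rmin_l].
  rewrite Rminus_eq_0, Rabs_R0; lra.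
  replace (x + h - x) with h by ring. eapply Rlt_le_trans; [exact hl|apply Rmin_r].
Qed.


Lemma exRInt_clamp (f : R -> R) :
  (forall x, continuity_pt (fun y => f (clamp y)) x) -> ex_RInt f 0 1.
Proof.
  intros H. apply ex_RInt_ext with (fun y => f (clamp y)).
  intros x Hx. rewrite Rmin_left, Rmax_right in Hx by lra. rewrite clamp_id; [reflexivity|lra].
  apply (ex_RInt_continuous (V:=R_CompleteNormedModule)). intros z _. apply continuity_pt_filterlim. apply H.
Qed.

Lemma RInt_plusR f g a b : ex_RInt f a b -> ex_RInt g a b ->
  RInt (fun x => f x + g x) a b = RInt f a b + RInt g a b.
Proof. intros. exact (RInt_plus f g a b H H0). Qed.
Lemma RInt_minusR f g a b : ex_RInt f a b -> ex_RInt g a b ->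
  RInt (fun x => f x - g x) a b = RInt f a b - RInt g a b.
Proof. intros. exact (RInt_minus f g a b H H0). Qed.
Lemma RInt_scalR f a b k : ex_RInt f a b ->
  RInt (fun x => k * f x) a b = k * RInt f a b.
Proof. intros. exact (RInt_scal f a b k H). Qed.
Lemma ex_RInt_plusR f g a b : ex_RInt f a b -> ex_RInt g a b -> ex_RInt (fun x => f x + g x) a b.
Proof. intros. exact (ex_RInt_plus f g a b H H0). Qed.
Lemma ex_RInt_minusR f g a b : ex_RInt f a b -> ex_RInt g a b -> ex_RInt (fun x => f x - g x) a b.
Proof. intros. exact (ex_RInt_minus f g a b H H0). Qed.
Lemma ex_RInt_scalR f a b k : ex_RInt f a b -> ex_RInt (fun x => k * f x) a b.
Proof. intros. exact (ex_RInt_scal f a b k H). Qed.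
Lemma RInt_constR (c:R) : @RInt R_CompleteNormedModule (fun _ => c) 0 1 = c.
Proof. rewrite (RInt_const (V:=R_CompleteNormedModule)). unfold scal; simpl; unfold mult; simpl. ring. Qed.

Lemma RInt_abs_bound f c : ex_RInt f 0 1 -> (forall x, 0 < x < 1 -> Rabs (f x) <= c) ->
  Rabs (RInt f 0 1) <= c.
Proof.
  intros Hf Hb. apply Rabs_le. split.
  - rewrite <- (RInt_constR (-c)). apply RInt_le; auto. lra. apply ex_RInt_const.
    intros x Hx. specialize (Hb x Hx). apply Rabs_le_between in Hb. lra.
  - rewrite <- (RInt_constR c). apply RInt_le; auto. lra. apply ex_RInt_const.
    intros x Hx. specialize (Hb x Hx). apply Rabs_le_between in Hb. lra.
Qed.

Lemma FTC01 (G g : R -> R) :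
  (forall x, 0 < x < 1 -> derivable_pt_lim G x (g x)) ->
  (forall x, continuity_pt (fun y => G (clamp y)) x) ->
  (forall x, continuity_pt (fun y => g (clamp y)) x) ->
  RInt g 0 1 = G 1 - G 0.
Proof.
  intros HD HG Hg.
  set (gc := fun y => g (clamp y)).
  assert (exg : forall a b, ex_RInt gc a b).
  { intros a b. apply (ex_RInt_continuous (V:=R_CompleteNormedModule)). intros z _. apply continuity_pt_filterlim. apply Hg. }
  set (P := fun b => RInt gc 0 b).
  assert (DP : forall b, is_derive P b (gc b)).
  { intros b. apply (is_derive_RInt gc P 0 b). apply filter_forall. intros c. unfold P. apply (RInt_correct (V:=R_CompleteNormedModule)). apply exg.
    apply continuity_pt_filterlim. apply Hg. }
  set (h := fun y => G (clamp y) - P y).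
  destruct (MVT_gen h 0 1 (fun _ => 0)) as [c [_ Hc]].
  - intros x Hx. rewrite Rmin_left, Rmax_right in Hx by lra.
    apply is_derive_Reals. unfold h.
    apply dl_eq with (g x - gc x).
    apply dl_minus. apply dl_loc with G (Rmin x (1 - x)).
    apply Rmin_pos; lra.
    intros y Hy. rewrite clamp_id; auto.
    assert (Rmin x (1-x) <= x) by apply Rmin_l. assert (Rmin x (1-x) <= 1 - x) by apply Rmin_r.
    apply Rabs_def2 in Hy. lra.
    apply HD; auto. apply is_derive_Reals. apply DP.
    unfold gc. rewrite clamp_id; lra.
  - intros x _. unfold h. apply cp_minus. apply HG.
    apply continuity_pt_filterlim. apply (ex_derive_continuous (K:=R_AbsRing) (V:=R_NormedModule) P). exists (gc x). apply DP.
  - unfold h, P in Hc. rewrite RInt_point in Hc. rewrite clamp_id in Hc by lra.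
    rewrite (clamp_id 0) in Hc by lra. unfold zero in Hc; simpl in Hc.
    replace (RInt g 0 1) with (RInt gc 0 1). lra.
    apply RInt_ext. intros x Hx. rewrite Rmin_left, Rmax_right in Hx by lra. unfold gc.
    rewrite clamp_id; lra.
Qed.


Lemma absb x y : Rabs x <= y -> -y <= x <= y.
Proof. unfold Rabs; destruct Rcase_abs; lra. Qed.
Lemma absb' x : -Rabs x <= x <= Rabs x.
Proof. unfold Rabs; destruct Rcase_abs; lra. Qed.

Lemma slice_ex F r : (forall x s, continuity_2d_pt F x s) -> ex_RInt (fun x => F x r) 0 1.
Proof.
  intros HF. apply (ex_RInt_continuous (V:=R_CompleteNormedModule)). intros z _.
  apply continuity_pt_filterlim. apply cont2_to_1. apply HF.
Qed.

Lemma param_cont F : (forall x s, continuity_2d_pt F x s) ->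
  forall s, continuity_pt (fun s => RInt (fun x => F x s) 0 1) s.
Proof.
  intros HF s eps He.
  assert (He2 : 0 < eps / 2) by lra.
  destruct (uniform_continuity_2d_1d F 0 1 s (fun x _ => HF x s) (mkposreal _ He2)) as [d Hd].
  exists d. split. apply cond_pos. intros v [_ Hv]. simpl in *. unfold R_dist in *.
  rewrite <- RInt_minusR by (apply slice_ex; auto).
  apply Rle_lt_trans with (eps/2); [|lra].
  apply RInt_abs_bound. apply ex_RInt_minusR; apply slice_ex; auto.
  intros x Hx. left. apply Rabs_def2 in Hv. apply (Hd x s x v); try lra.
  rewrite Rminus_eq_0, Rabs_R0. apply cond_pos.
Qed.

Lemma param_deriv F Ft t0 : (forall x s, continuity_2d_pt F x s) ->
  (forall x s, continuity_2d_pt Ft x s) ->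
  (forall x r, 0 < x < 1 -> t0 < r -> derivable_pt_lim (fun s => F x s) r (Ft x r)) ->
  forall s, t0 < s ->
  derivable_pt_lim (fun s => RInt (fun x => F x s) 0 1) s (RInt (fun x => Ft x s) 0 1).
Proof.
  intros HF HFt HD s Hs eps He.
  assert (He2 : 0 < eps / 2) by lra.
  destruct (uniform_continuity_2d_1d Ft 0 1 s (fun x _ => HFt x s) (mkposreal _ He2)) as [d Hd].
  assert (dp : 0 < Rmin d ((s - t0)/2)) by (apply Rmin_pos; [apply cond_pos| lra]).
  exists (mkposreal _ dp). intros h hn hl. simpl in hl.
  assert (hd : Rabs h < d) by (eapply Rlt_le_trans; [exact hl|apply Rmin_l]).
  assert (hs : Rabs h < (s - t0)/2) by (eapply Rlt_le_trans; [exact hl|apply Rmin_r]).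
  assert (Hb : forall r, Rmin s (s+h) <= r <= Rmax s (s+h) -> Rabs (r - s) <= Rabs h).
  { intros r. unfold Rmin, Rmax; destruct Rle_dec; unfold Rabs; repeat destruct Rcase_abs; lra. }
  assert (Pt : forall x, 0 < x < 1 ->
     Rabs (F x (s+h) - F x s - h * Ft x s) <= eps/2 * Rabs h).
  { intros x Hx.
    destruct (MVT_gen (fun r => F x r) s (s+h) (Ft x)) as [c [Hc1 Hc2]].
    - intros r Hr. apply is_derive_Reals. apply HD; auto.
      assert (Rabs (r - s) <= Rabs h) by (apply Hb; lra). apply absb in H. pose proof (absb' h). lra.
    - intros r Hr. apply derivable_continuous_pt. exists (Ft x r). apply HD; auto.
      assert (Rabs (r - s) <= Rabs h) by (apply Hb; lra). apply absb in H. pose proof (absb' h). lra.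
    - simpl in Hc2. rewrite Hc2.
      replace (Ft x c * (s + h - s) - h * Ft x s) with (h * (Ft x c - Ft x s)) by ring.
      rewrite Rabs_mult. rewrite Rmult_comm. apply Rmult_le_compat_r. apply Rabs_pos.
      left. assert (Rabs (c - s) <= Rabs h) by (apply Hb; lra).
      apply absb in H. pose proof (absb' h). apply (Hd x s x c); try lra.
      rewrite Rminus_eq_0, Rabs_R0. apply cond_pos. }
  assert (Lin : RInt (fun x => F x (s+h) - F x s - h * Ft x s) 0 1 =
     RInt (fun x => F x (s+h)) 0 1 - RInt (fun x => F x s) 0 1 - h * RInt (fun x => Ft x s) 0 1).
  { assert (E1 := slice_ex F (s+h) HF). assert (E2 := slice_ex F s HF).
    assert (E3 := slice_ex Ft s HFt).
    rewrite (RInt_minusR _ _ _ _ (ex_RInt_minusR _ _ _ _ E1 E2) (ex_RInt_scalR _ _ _ h E3)).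
    rewrite (RInt_minusR _ _ _ _ E1 E2). rewrite (RInt_scalR _ _ _ h E3). reflexivity. }
  assert (Bd : Rabs (RInt (fun x => F x (s+h) - F x s - h * Ft x s) 0 1) <= eps/2 * Rabs h).
  { apply RInt_abs_bound. apply ex_RInt_minusR. apply ex_RInt_minusR; apply slice_ex; auto.
    apply ex_RInt_scalR; apply slice_ex; auto. exact Pt. }
  rewrite Lin in Bd. cbv beta.
  set (A := RInt (fun x => F x (s+h)) 0 1) in *.
  set (B := RInt (fun x => F x s) 0 1) in *.
  set (I := RInt (fun x => Ft x s) 0 1) in *.
  replace ((A - B) / h - I) with ((A - B - h * I) * / h) by (field; exact hn).
  rewrite Rabs_mult, Rabs_inv.
  assert (0 < Rabs h) by (apply Rabs_pos_lt; auto).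
  apply Rle_lt_trans with (eps/2 * Rabs h * / Rabs h).
  apply Rmult_le_compat_r. left; apply Rinv_0_lt_compat; auto. exact Bd.
  replace (eps / 2 * Rabs h * / Rabs h) with (eps/2) by (field; lra). lra.
Qed.


Lemma quad x p q : 0 <= x <= 1 -> 2*(q*q) + p*p + 2*x*(p*q) >= p*p/2.
Proof.
  intros Hx. assert (0 <= 2 * ((q + x*p/2)*(q + x*p/2))) by (apply Rmult_le_pos; [lra|apply Rle_0_sqr]).
  assert (0 <= p*p*(1 - x*x)/2).
  { apply Rmult_le_pos; [|lra]. apply Rmult_le_pos. apply Rle_0_sqr. nra. }
  nra.
Qed.

Lemma comp_ineq x p q r e c gam : 0 <= x <= 1 -> 0 <= e -> 2*gam <= e/2 + 2*c ->
  2*p*(e*r - c*p) + 2*gam*(p*p) <= 2*e*(q*q + p*r) + e*(p*p + 2*x*(p*q)).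
Proof.
  intros Hx He Hg. pose proof (quad x p q Hx).
  assert (e*(2*(q*q) + p*p + 2*x*(p*q)) >= e*(p*p/2)) by (apply Rmult_ge_compat_l; lra).
  assert ((e/2 + 2*c - 2*gam) * (p*p) >= 0) by (apply Rle_ge, Rmult_le_pos; [lra|apply Rle_0_sqr]).
  nra.
Qed.

Lemma slice_bound (p1 q1 r1 p2 q2 r2 : R -> R) (e1 e2 k c1 c2 gam : R) :
  0 <= e1 -> 0 <= e2 -> 0 < k ->
  2*gam <= e1/2 + 2*c1 -> 2*gam <= e2/2 + 2*c2 ->
  (forall x, 0 < x < 1 -> derivable_pt_lim p1 x (q1 x)) ->
  (forall x, 0 < x < 1 -> derivable_pt_lim q1 x (r1 x)) ->
  (forall x, 0 < x < 1 -> derivable_pt_lim p2 x (q2 x)) ->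
  (forall x, 0 < x < 1 -> derivable_pt_lim q2 x (r2 x)) ->
  (forall x, continuity_pt (fun y => p1 (clamp y)) x) ->
  (forall x, continuity_pt (fun y => q1 (clamp y)) x) ->
  (forall x, continuity_pt (fun y => r1 (clamp y)) x) ->
  (forall x, continuity_pt (fun y => p2 (clamp y)) x) ->
  (forall x, continuity_pt (fun y => q2 (clamp y)) x) ->
  (forall x, continuity_pt (fun y => r2 (clamp y)) x) ->
  p1 1 = 0 -> p2 1 = 0 ->
  e1 * p1 0 * q1 0 + e2 * k * p2 0 * q2 0 = 0 ->
  RInt (fun x => 2 * p1 x * (e1 * r1 x - c1 * p1 x) + k * (2 * p2 x * (e2 * r2 x - c2 * p2 x))) 0 1
  <= -2*gam * RInt (fun x => p1 x * p1 x + k * (p2 x * p2 x)) 0 1.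
Proof.
  intros He1 He2 Hk Hg1 Hg2 D1 D1' D2 D2' C1 C1' C1'' C2 C2' C2'' B1 B2 B0.
  set (G := fun x => 2*e1*(p1 x * q1 x) + 2*e2*k*(p2 x*q2 x) + e1*(x*(p1 x*p1 x)) + e2*k*(x*(p2 x*p2 x))).
  set (g := fun x => 2*e1*(q1 x*q1 x + p1 x*r1 x) + 2*e2*k*(q2 x*q2 x + p2 x*r2 x)
     + e1*(p1 x*p1 x + 2*x*(p1 x*q1 x)) + e2*k*(p2 x*p2 x + 2*x*(p2 x * q2 x))).
  set (u := fun x => p1 x * p1 x + k * (p2 x * p2 x)).
  set (h := fun x => 2 * p1 x * (e1 * r1 x - c1 * p1 x) + k * (2 * p2 x * (e2 * r2 x - c2 * p2 x))).
  assert (Ig : RInt g 0 1 = 0).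
  { rewrite (FTC01 G g).
    - unfold G. rewrite B1, B2. replace (2 * e1 * (p1 0 * q1 0) + 2 * e2 * k * (p2 0 * q2 0)) with (2*(e1 * p1 0 * q1 0 + e2 * k * p2 0 * q2 0)) by ring. lra.
    - intros x Hx. specialize (D1 x Hx). specialize (D1' x Hx). specialize (D2 x Hx). specialize (D2' x Hx).
      unfold G, g. eapply dl_eq. dlt. cbv beta. ring.
    - intros x. specialize (C1 x). specialize (C1' x). specialize (C2 x). specialize (C2' x).
      unfold G. cpt.
    - intros x. specialize (C1 x). specialize (C1' x). specialize (C2 x). specialize (C2' x).
      specialize (C1'' x). specialize (C2'' x). unfold g. cpt. }
  assert (Eu : ex_RInt u 0 1).
  { apply exRInt_clamp. intros x. specialize (C1 x). specialize (C2 x). unfold u. cpt. }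
  assert (Eg : ex_RInt g 0 1).
  { apply exRInt_clamp. intros x. specialize (C1 x). specialize (C1' x). specialize (C2 x). specialize (C2' x).
      specialize (C1'' x). specialize (C2'' x). unfold g. cpt. }
  assert (Eh : ex_RInt h 0 1).
  { apply exRInt_clamp. intros x. specialize (C1 x). specialize (C2 x).
      specialize (C1'' x). specialize (C2'' x). unfold h. cpt. }
  fold h u.
  apply Rle_trans with (RInt (fun x => g x - (2*gam) * u x) 0 1).
  - apply RInt_le. lra. exact Eh. apply ex_RInt_minusR. exact Eg. apply ex_RInt_scalR. exact Eu.
    intros x Hx. unfold h, g, u.
    assert (Hx' : 0 <= x <= 1) by lra.
    pose proof (comp_ineq x (p1 x) (q1 x) (r1 x) e1 c1 gam Hx' He1 Hg1).
    pose proof (comp_ineq x (p2 x) (q2 x) (r2 x) e2 c2 gam Hx' He2 Hg2).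
    apply Rmult_le_compat_l with (r := k) in H0; [|lra].
    nra.
  - rewrite RInt_minusR. rewrite RInt_scalR. rewrite Ig. lra. exact Eu. exact Eg.
    apply ex_RInt_scalR. exact Eu.
Qed.


Definition ext (t0 : R) (w : R -> R -> R) (u v : R) := w (clamp u) (Rmax t0 v).

Lemma ext_c t0 w x s : cont2_on (closed_dom t0) w -> continuity_2d_pt (fun u v => ext t0 w u v) x s.
Proof. intros H. unfold ext. apply ext_cont2. exact H. Qed.

Ltac c2t := repeat first [apply continuity_2d_pt_const | apply continuity_2d_pt_minus
  | apply continuity_2d_pt_plus | apply continuity_2d_pt_mult | (apply ext_c; assumption)].

Lemma dl_exp g x l : derivable_pt_lim g x l -> derivable_pt_lim (fun s => exp (g s)) x (exp (g x) * l).
Proof. intros H. apply (derivable_pt_lim_comp g exp). exact H. apply derivable_pt_lim_exp. Qed.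

Lemma exp_mono x y : x <= y -> exp x <= exp y.
Proof. intros H. destruct (Rle_lt_or_eq_dec _ _ H). left; apply exp_increasing; auto. subst; lra. Qed.

Theorem lemma1 (eps y0 c1 c2 t0 : R)
  (w1 w1x w1xx w1t w2 w2x w2xx w2t : R -> R -> R) :
  0 < eps -> -1 < y0 <= 0 -> 0 < c1 -> 0 < c2 ->
  let eps1 := eps / (1 + y0) ^ 2 in
  let eps2 := eps / (1 - y0) ^ 2 in
  let a := (1 + y0) / (1 - y0) in
  classical_sol eps1 c1 t0 w1 w1x w1xx w1t ->
  classical_sol eps2 c2 t0 w2 w2x w2xx w2t ->
  (forall t, t0 <= t -> w1 0 t = w2 0 t) ->
  (forall t, t0 <= t -> w1x 0 t + a * w2x 0 t = 0) ->
  (forall t, t0 <= t -> w1 1 t = 0 /\ w2 1 t = 0) ->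
  let Pi := Rpower a (- (3 / 2)) in
  let gamma := Rmin (a ^ 3 * c1) c2 + eps2 / 4 in
  forall t (ht : t0 <= t)
    (pr_t : Riemann_integrable (L2_integrand w1 w2 t) 0 1)
    (pr_0 : Riemann_integrable (L2_integrand w1 w2 t0) 0 1),
    sqrt (RiemannInt pr_t) <= Pi * exp (- gamma * (t - t0)) * sqrt (RiemannInt pr_0).
Proof.
  intros Heps Hy0 Hc1 Hc2 eps1 eps2 a S1 S2 HB0 HBx HB1 Pi gamma t ht pr_t pr_0.
  assert (Hp : 0 < 1 + y0) by lra. assert (Hm : 1 <= 1 - y0) by lra.
  assert (Ha : 0 < a <= 1).
  { unfold a. split. apply Rdiv_lt_0_compat; lra.
    apply (Rmult_le_reg_r (1 - y0)). lra. unfold Rdiv. rewrite Rmult_assoc, Rinv_l by lra. lra. }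
  assert (He1 : 0 <= eps1) by (unfold eps1; apply Rlt_le, Rdiv_lt_0_compat; [lra| apply pow_lt; lra]).
  assert (He2 : 0 <= eps2) by (unfold eps2; apply Rlt_le, Rdiv_lt_0_compat; [lra| apply pow_lt; lra]).
  assert (He12 : eps2 <= eps1).
  { unfold eps1, eps2, Rdiv. apply Rmult_le_compat_l. lra. apply Rinv_le_contravar.
    apply pow_lt; lra. simpl. nra. }
  assert (Hrel : eps2 * / a = eps1 * a).
  { unfold eps1, eps2, a. field. lra. }
  assert (Ha3 : a ^ 3 * c1 <= c1).
  { assert (a ^ 3 <= 1). simpl. destruct Ha. assert (a*a <= 1) by nra. nra. nra. }
  assert (Hg1 : 2 * gamma <= eps1 / 2 + 2 * c1).
  { unfold gamma. pose proof (Rmin_l (a ^ 3 * c1) c2). lra. }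
  assert (Hg2 : 2 * gamma <= eps2 / 2 + 2 * c2).
  { unfold gamma. pose proof (Rmin_r (a ^ 3 * c1) c2). lra. }
  assert (Hk : 1 <= / a).
  { rewrite <- Rinv_1. apply Rinv_le_contravar; lra. }
  clearbody eps1 eps2 gamma.
  destruct S1 as [D1 [Cw1 [Cw1x [Cw1xx [Cw1t Pde1]]]]].
  destruct S2 as [D2 [Cw2 [Cw2x [Cw2xx [Cw2t Pde2]]]]].
  set (k := / a) in *.
  set (F := fun u v => ext t0 w1 u v * ext t0 w1 u v + k * (ext t0 w2 u v * ext t0 w2 u v)).
  set (Ft := fun u v => 2 * ext t0 w1 u v * ext t0 w1t u v + k * (2 * ext t0 w2 u v * ext t0 w2t u v)).
  assert (FC : forall x s, continuity_2d_pt F x s).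
  { intros x s. unfold F. c2t. }
  assert (FtC : forall x s, continuity_2d_pt Ft x s).
  { intros x s. unfold Ft. c2t. }
  assert (FD : forall x r, 0 < x < 1 -> t0 < r -> derivable_pt_lim (fun s => F x s) r (Ft x r)).
  { intros x r Hx Hr.
    destruct (D1 x r (conj Hx Hr)) as [_ [_ d1]]. destruct (D2 x r (conj Hx Hr)) as [_ [_ d2]].
    apply dl_loc with (fun s => w1 x s * w1 x s + k * (w2 x s * w2 x s)) (r - t0). lra.
    intros y Hy. unfold F, ext. rewrite clamp_id by lra. rewrite Rmax_right. reflexivity.
    apply Rabs_def2 in Hy. lra.
    eapply dl_eq. dlt. cbv beta. unfold Ft, ext. rewrite clamp_id by lra. rewrite Rmax_right by lra. ring. }
  set (E := fun s => (RInt (fun x => F x s) 0 1 : R)).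
  set (Ed := fun s => (RInt (fun x => Ft x s) 0 1 : R)).
  assert (ED : forall s, t0 < s -> derivable_pt_lim E s (Ed s)).
  { intros s Hs. apply (param_deriv F Ft t0 FC FtC FD s Hs). }
  assert (EC : forall s, continuity_pt E s).
  { intros s. apply (param_cont F FC s). }
  assert (EB : forall s, t0 < s -> Ed s <= -2 * gamma * E s).
  { intros s Hs.
    assert (Eq1 : Ed s = RInt (fun x => 2 * w1 x s * (eps1 * w1xx x s - c1 * w1 x s)
        + k * (2 * w2 x s * (eps2 * w2xx x s - c2 * w2 x s))) 0 1).
    { apply RInt_ext. intros x Hx. rewrite Rmin_left, Rmax_right in Hx by lra.
      unfold Ft, ext. rewrite clamp_id by lra. rewrite Rmax_right by lra.
      rewrite Pde1, Pde2 by (split; lra). reflexivity. }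
    assert (Eq2 : E s = RInt (fun x => w1 x s * w1 x s + k * (w2 x s * w2 x s)) 0 1).
    { apply RInt_ext. intros x Hx. rewrite Rmin_left, Rmax_right in Hx by lra.
      unfold F, ext. rewrite clamp_id by lra. rewrite Rmax_right by lra. reflexivity. }
    rewrite Eq1, Eq2.
    apply (slice_bound (fun x => w1 x s) (fun x => w1x x s) (fun x => w1xx x s)
                       (fun x => w2 x s) (fun x => w2x x s) (fun x => w2xx x s)
                       eps1 eps2 k c1 c2 gamma); auto.
    - unfold k; apply Rinv_0_lt_compat; lra.
    - intros x Hx. apply (D1 x s (conj Hx Hs)).
    - intros x Hx. apply (D1 x s (conj Hx Hs)).
    - intros x Hx. apply (D2 x s (conj Hx Hs)).
    - intros x Hx. apply (D2 x s (conj Hx Hs)).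
    - apply cont_x with t0; auto; lra.
    - apply cont_x with t0; auto; lra.
    - apply cont_x with t0; auto; lra.
    - apply cont_x with t0; auto; lra.
    - apply cont_x with t0; auto; lra.
    - apply cont_x with t0; auto; lra.
    - apply HB1; lra.
    - apply HB1; lra.
    - cbv beta. rewrite (HB0 s) by lra.
      replace (eps1 * w2 0 s * w1x 0 s + eps2 * k * w2 0 s * w2x 0 s)
        with (eps1 * w2 0 s * (w1x 0 s + a * w2x 0 s)).
      rewrite HBx by lra. ring. rewrite Hrel. ring. }
  set (X := fun s => exp (2 * gamma * (s - t0))).
  set (H := fun s => E s * X s).
  assert (dX : forall r, derivable_pt_lim X r (X r * (2 * gamma))).
  { intros r. unfold X. apply (dl_exp (fun s => 2 * gamma * (s - t0))). eapply dl_eq. dlt. cbv beta; ring. }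
  assert (HD : forall r, t0 < r -> derivable_pt_lim H r (Ed r * X r + E r * (X r * (2 * gamma)))).
  { intros r Hr. unfold H. eapply dl_eq. apply dl_mult. apply ED; lra. apply dX. reflexivity. }
  assert (HC : forall s, continuity_pt H s).
  { intros s. unfold H. apply cp_mult. apply EC. apply derivable_continuous_pt.
    exists (X s * (2 * gamma)). apply dX. }
  assert (Xpos : forall s, 0 < X s) by (intros; apply exp_pos).
  assert (Hmono : forall t1, t0 < t1 <= t -> H t <= H t1).
  { intros t1 Ht1. destruct (Req_dec t1 t) as [<-|Hne]. lra.
    destruct (MVT_gen H t1 t (fun r => Ed r * X r + E r * (X r * (2 * gamma)))) as [c [Hc Heq]].
    - intros r Hr. rewrite Rmin_left, Rmax_right in Hr by lra. apply is_derive_Reals. apply HD. lra.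
    - intros r _. apply HC.
    - rewrite Rmin_left, Rmax_right in Hc by lra.
      pose proof (EB c ltac:(lra)). pose proof (Xpos c).
      assert (Ed c * X c + E c * (X c * (2 * gamma)) <= 0).
      { replace (Ed c * X c + E c * (X c * (2 * gamma))) with (X c * (Ed c + 2 * gamma * E c)) by ring.
        assert (Ed c + 2 * gamma * E c <= 0) by lra. nra. }
      nra. }
  assert (Hmono0 : H t <= H t0).
  { destruct (Req_dec t t0) as [->|Hne]. lra.
    apply Rnot_lt_le. intros Hlt.
    destruct (HC t0 (H t - H t0)) as [alp [Halp Hc]]. lra.
    assert (Hm0 : 0 < Rmin alp (t - t0)) by (apply Rmin_pos; lra).
    pose proof (Rmin_l alp (t - t0)). pose proof (Rmin_r alp (t - t0)).
    specialize (Hc (t0 + Rmin alp (t - t0) / 2)).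
    unfold D_x, no_cond, R_dist in Hc. simpl in Hc.
    assert (Hq : Rabs (H (t0 + Rmin alp (t - t0) / 2) - H t0) < H t - H t0).
    { apply Hc. split. split. auto. lra.
      unfold Rdist. rewrite Rabs_right; lra. }
    apply Rabs_def2 in Hq. pose proof (Hmono (t0 + Rmin alp (t - t0) / 2) ltac:(lra)). lra. }
  assert (Edec : E t <= E t0 * exp (- (2 * gamma * (t - t0)))).
  { assert (Ha0 : H t0 = E t0) by (unfold H, X; rewrite Rminus_diag, Rmult_0_r, exp_0; ring).
    assert (Ha1 : E t = H t * exp (- (2 * gamma * (t - t0)))).
    { unfold H, X. rewrite Rmult_assoc, <- exp_plus. replace (2 * gamma * (t - t0) + - (2 * gamma * (t - t0))) with 0 by ring.
      rewrite exp_0; ring. }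
    rewrite Ha1. rewrite <- Ha0. apply Rmult_le_compat_r. left; apply exp_pos. exact Hmono0. }
  assert (Nt : RiemannInt pr_t <= E t).
  { rewrite <- (RInt_Reals _ _ _ pr_t). unfold E. apply RInt_le. lra.
    apply ex_RInt_Reals_1; exact pr_t. apply slice_ex; exact FC.
    intros x Hx. unfold L2_integrand, F, ext. rewrite clamp_id by lra. rewrite Rmax_right by lra.
    simpl. pose proof (Rle_0_sqr (w2 x t)) as Q; unfold Rsqr in Q. nra. }
  assert (N0 : E t0 <= k * RiemannInt pr_0).
  { rewrite <- (RInt_Reals _ _ _ pr_0). unfold E. rewrite <- RInt_scalR by (apply ex_RInt_Reals_1; exact pr_0).
    apply RInt_le. lra. apply slice_ex; exact FC. apply ex_RInt_scalR. apply ex_RInt_Reals_1; exact pr_0.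
    intros x Hx. unfold L2_integrand, F, ext. rewrite clamp_id by lra. rewrite Rmax_right by lra.
    simpl. pose proof (Rle_0_sqr (w1 x t0)) as Q; unfold Rsqr in Q. nra. }
  assert (N0p : 0 <= RiemannInt pr_0).
  { rewrite <- (RInt_Reals _ _ _ pr_0).
    apply Rle_trans with (@RInt R_CompleteNormedModule (fun _ => 0) 0 1).
    rewrite RInt_constR; lra.
    apply RInt_le. lra. apply ex_RInt_const. apply ex_RInt_Reals_1; exact pr_0.
    intros x Hx. unfold L2_integrand. simpl. pose proof (Rle_0_sqr (w1 x t0)) as Q; unfold Rsqr in Q. pose proof (Rle_0_sqr (w2 x t0)).
    unfold Rsqr in *. nra. }
  assert (lna : ln a <= 0) by (rewrite <- ln_1; apply ln_le; lra).
  assert (PiPi : k <= Pi * Pi).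
  { unfold Pi, Rpower, k. rewrite <- exp_plus. rewrite <- (exp_ln a) at 1 by lra. rewrite <- exp_Ropp.
    apply exp_mono. lra. }
  set (K := Pi * exp (- gamma * (t - t0))).
  assert (Kp : 0 <= K) by (unfold K, Pi, Rpower; left; apply Rmult_lt_0_compat; apply exp_pos).
  assert (KK : K * K = Pi * Pi * exp (- (2 * gamma * (t - t0)))).
  { unfold K. replace (- (2 * gamma * (t - t0))) with (- gamma * (t - t0) + - gamma * (t - t0)) by ring.
    rewrite exp_plus. ring. }
  assert (Nfin : RiemannInt pr_t <= K * K * RiemannInt pr_0).
  { rewrite KK. pose proof (exp_pos (- (2 * gamma * (t - t0)))).
    assert (k * RiemannInt pr_0 <= Pi * Pi * RiemannInt pr_0) by (apply Rmult_le_compat_r; lra).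
    nra. }
  apply Rle_trans with (sqrt (K * K * RiemannInt pr_0)).
  apply sqrt_le_1_alt; exact Nfin.
  rewrite sqrt_mult_alt by nra. rewrite sqrt_square by exact Kp. unfold K. lra.
Qed.
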